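(* Consider the miners' game with $n$ miners $s_1,\dots,s_n$, parameters $R>0$, $N>0$, unit prices $\lambda_1,\dots,\lambda_n>0$, where miner $s_i$ chooses $\mu_i\ge0$ and receives profit $P_i=\frac{\mu_i}{\sum_{j=1}^n\mu_j}RN-\lambda_i\mu_i$ (the fraction being $0$ if $\sum_j\mu_j=0$). Let $\boldsymbol{\mu}^*=(\mu_1^*,\dots,\mu_n^* )$ be a Nash equilibrium of this game. Then for any $i,j$, if $\lambda_i\le\lambda_j$ then $\mu_i^*\ge\mu_j^*$.
   Context: A Nash equilibrium is a profile $\boldsymbol{\mu}^*$ with all $\mu_i^*\ge 0$ such that no miner $s_i$ can strictly increase $P_i$ by unilaterally changing $\mu_i^*$ to another value $\mu_i\ge0$. *)

(* Defs.v *)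
From mathcomp Require Import all_boot all_order all_algebra.
Set Implicit Arguments. Unset Strict Implicit. Unset Printing Implicit Defensive.
Import Order.TTheory GRing.Theory Num.Theory.
Local Open Scope ring_scope.

Definition profit {R : realFieldType} {n : nat} (R0 N : R) (lam : 'I_n -> R)
  (mu : 'I_n -> R) (i : 'I_n) : R :=
  let S := \sum_(j < n) mu j in
  (if S == 0 then 0 else mu i / S) * R0 * N - lam i * mu i.

Definition deviate {R : realFieldType} {n : nat} (mu : 'I_n -> R) (i : 'I_n) (x : R)
  : 'I_n -> R := fun j => if j == i then x else mu j.

Definition nash_equilibrium {R : realFieldType} {n : nat} (R0 N : R)
  (lam : 'I_n -> R) (mu : 'I_n -> R) : Prop :=
  (forall i, 0 <= mu i) /\
  (forall i (x : R), 0 <= x ->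
     ~ (profit R0 N lam mu i < profit R0 N lam (deviate mu i x) i)).

(* Main.v *)
Require Import Defs.
From mathcomp Require Import all_boot all_order all_algebra.
From mathcomp Require Import ring lra.
Import Order.TTheory GRing.Theory Num.Theory.
Local Open Scope ring_scope.

Lemma sum_dev (R : realFieldType) n (mu : 'I_n -> R) i x :
  \sum_j deviate mu i x j = \sum_j mu j - mu i + x.
Proof.
rewrite /deviate (bigD1 i) //= [in RHS](bigD1 i) //= eqxx.
under eq_bigr => j hj do rewrite (negbTE hj).
by rewrite addrC (addrC (mu i)) addrK.
Qed.

Lemma key (R : realFieldType) n (R0 N : R) (lam : 'I_n -> R) mu i x :
  nash_equilibrium R0 N lam mu -> 0 < \sum_j mu j -> 0 <= x ->
  0 < x + (\sum_j mu j - mu i) ->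
  (x - mu i) * (R0 * N * (\sum_j mu j - mu i)
     - lam i * (\sum_j mu j) * (x + (\sum_j mu j - mu i))) <= 0.
Proof.
move=> [_ H] hS hx hy.
have := H i x hx; move/negP; rewrite -leNgt /profit sum_dev.
rewrite /deviate eqxx.
set S := \sum_j mu j.
set y := x + (S - mu i) in hy *.
have ey : S - mu i + x = y by rewrite /y addrC.
rewrite ey (gt_eqF hS) (gt_eqF hy) => h.
have hSy : 0 < S * y by rewrite mulr_gt0.
have := h; rewrite -(ler_pM2r hSy) => h2.
have e1 : (x / y * R0 * N - lam i * x) * (S * y)
          = x * R0 * N * S - lam i * x * S * y.
  by field; rewrite gt_eqF.
have e2 : (mu i / S * R0 * N - lam i * mu i) * (S * y)
          = mu i * R0 * N * y - lam i * mu i * S * y.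
  by field; rewrite gt_eqF.
rewrite e1 e2 in h2.
rewrite /y in h2 *.
nra.
Qed.

Lemma S_ge (R : realFieldType) n (mu : 'I_n -> R) i :
  (forall k, 0 <= mu k) -> mu i <= \sum_j mu j.
Proof.
move=> h; rewrite (bigD1 i) //= lerDl; exact: sumr_ge0.
Qed.

Lemma upper (R : realFieldType) n (R0 N : R) (lam : 'I_n -> R) mu i :
  nash_equilibrium R0 N lam mu -> 0 < \sum_j mu j -> 0 < lam i ->
  0 < R0 * N ->
  R0 * N * (\sum_j mu j - mu i) <= lam i * (\sum_j mu j) * (\sum_j mu j).
Proof.
move=> ne hS hl hc; have [h0 _] := ne.
rewrite leNgt; apply/negP => hlt.
set S := \sum_j mu j in hS hlt.
set c := R0 * N in hc hlt.
set e := (c * (S - mu i) - lam i * S * S) / (2 * (lam i * S)).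
have hlS : 0 < lam i * S by rewrite mulr_gt0.
have he : 0 < e by rewrite /e divr_gt0 ?subr_gt0 // mulr_gt0.
have hmi := h0 i.
have hSi : mu i <= S by exact: S_ge.
have hx1 : 0 <= mu i + e by lra.
have hx2 : 0 < mu i + e + (S - mu i) by lra.
have := @key _ _ R0 N lam mu i (mu i + e) ne hS hx1 hx2.
have -> : mu i + e - mu i = e by ring.
rewrite pmulr_rle0 // -/S -/c => hk.
have he2 : lam i * S * e * 2 = c * (S - mu i) - lam i * S * S.
  by rewrite /e; field; rewrite ?gt_eqF // ?(gt_eqF hS) ?(gt_eqF hl).
nra.
Qed.

Lemma lower (R : realFieldType) n (R0 N : R) (lam : 'I_n -> R) mu j :
  nash_equilibrium R0 N lam mu -> 0 < mu j -> 0 < lam j ->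
  0 < R0 * N ->
  lam j * (\sum_k mu k) * (\sum_k mu k) <= R0 * N * (\sum_k mu k - mu j).
Proof.
move=> ne hm hl hc; have [h0 _] := ne.
have hSj : mu j <= \sum_k mu k by exact: S_ge.
have hS : 0 < \sum_k mu k by exact: lt_le_trans hSj.
rewrite leNgt; apply/negP => hlt.
set S := \sum_k mu k in hS hlt hSj.
set c := R0 * N in hc hlt.
have hlS : 0 < lam j * S by rewrite mulr_gt0.
set D := (lam j * S * S - c * (S - mu j)) / (lam j * S).
have hD : 0 < D by rewrite /D divr_gt0 // subr_gt0.
have hDe : lam j * S * D = lam j * S * S - c * (S - mu j).
  by rewrite /D; field; rewrite ?gt_eqF // ?(gt_eqF hS) ?(gt_eqF hl).
set e := Num.min D (mu j) / 2.
have hmin1 : Num.min D (mu j) <= D by rewrite ge_min lexx.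
have hmin2 : Num.min D (mu j) <= mu j by rewrite ge_min lexx orbT.
have hmin0 : 0 < Num.min D (mu j) by rewrite lt_min hD hm.
have he0 : 0 < e by rewrite /e; lra.
have he1 : e < D by rewrite /e; lra.
have he2 : e < mu j by rewrite /e; lra.
have hx1 : 0 <= mu j - e by lra.
have hx2 : 0 < mu j - e + (S - mu j) by lra.
have := @key _ _ R0 N lam mu j (mu j - e) ne hS hx1 hx2.
have -> : mu j - e - mu j = - e by ring.
rewrite mulNr oppr_le0 pmulr_rge0 // -/S -/c => hk.
have : lam j * S * e < lam j * S * D by rewrite ltr_pM2l.
nra.
Qed.

Theorem corollary1 (R : realFieldType) (n : nat) (R0 N : R) (lam : 'I_n -> R)
  (mu : 'I_n -> R) :
  0 < R0 -> 0 < N -> (forall i, 0 < lam i) ->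
  nash_equilibrium R0 N lam mu ->
  forall i j : 'I_n, lam i <= lam j -> mu j <= mu i.
Proof.
move=> h0 hN hl ne i j hij.
rewrite leNgt; apply/negP => hlt.
have [hm _] := ne.
have hmj : 0 < mu j by exact: le_lt_trans (hm i) hlt.
have hc : 0 < R0 * N by rewrite mulr_gt0.
have hSj : mu j <= \sum_k mu k by exact: S_ge.
have hS : 0 < \sum_k mu k by exact: lt_le_trans hSj.
have u := @upper _ _ R0 N lam mu i ne hS (hl i) hc.
have l := @lower _ _ R0 N lam mu j ne hmj (hl j) hc.
set S := \sum_k mu k in u l hS.
have : lam i * S * S <= lam j * S * S by rewrite !ler_pM2r.
nra.
Qed.
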